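(* Let $n$ be a positive integer and $m_0, m_1, \dots, m_{n-1}$ positive integers. Let $x_0, x_1, \dots, x_n$ be positive odd integers with $x_k = (2^{m_{k-1}}x_{k-1}-1)/3$ for $1 \le k \le n$, and put $b_k = \sum_{h=0}^{k-1} m_h$ (so $b_0 = 0$). For a positive odd integer $y_0$, define $y_k = (2^{m_{k-1}}y_{k-1}-1)/3$ for $1 \le k \le n$. Then $y_1, \dots, y_n$ are all (odd) integers if and only if $y_0 \equiv x_0 \pmod{2\cdot 3^n}$; in that case $y_k \equiv x_k \pmod{2^{b_k+1}3^{n-k}}$ for every $0 \le k \le n$. In particular there are infinitely many such sequences $y_0, y_1, \dots, y_n$ generated with the same numbers $m_0, \dots, m_{n-1}$. *)

(* Defs.v *)
From mathcomp Require Import all_boot all_order all_algebra.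
Set Implicit Arguments. Unset Strict Implicit. Unset Printing Implicit Defensive.
Import Order.TTheory GRing.Theory Num.Theory.
Local Open Scope ring_scope.

(* The sequence y_0 = y0, y_{k+1} = (2^{m_k} y_k - 1)/3, computed in rat
   (so that "y_k is an integer" is a genuine condition). *)
Fixpoint yseq (m : nat -> nat) (y0 : rat) (k : nat) : rat :=
  match k with
  | 0 => y0
  | k'.+1 => (2 ^+ m k' * yseq m y0 k' - 1) / 3
  end.

Definition bsum (m : nat -> nat) (k : nat) : nat := (\sum_(h < k) m h)%N.

Definition pos_odd (z : int) : Prop := 0 < z /\ (z %% 2)%Z = 1.

(* Main.v *)
Require Import Defs.
From mathcomp Require Import all_boot all_order all_algebra ring.
Import Order.TTheory GRing.Theory Num.Theory.
Local Open Scope ring_scope.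

Lemma bsumS m k : bsum m k.+1 = (bsum m k + m k)%N.
Proof. by rewrite /bsum big_ord_recr. Qed.

Lemma key n m (x : nat -> int)
  (hxrec : forall k : nat, (1 <= k <= n)%N ->
     3 * x k = 2 ^+ m k.-1 * x k.-1 - 1) (y0 : int) k : (k <= n)%N ->
 3 ^+ k * yseq m y0%:~R k = 3 ^+ k * (x k)%:~R + 2 ^+ bsum m k * (y0%:~R - (x 0%N)%:~R) :> rat.
Proof.
elim: k => [|k IH] hk /=.
  by rewrite /bsum big_ord0 !expr0 !mul1r addrC subrK.
have := hxrec k.+1 hk => /= /(congr1 (fun z : int => z%:~R : rat)).
rewrite rmorphB !rmorphM /= => H. 
have H3 : 3 ^+ k.+1 * ((2 ^+ m k * yseq m y0%:~R k - 1) / 3) =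
   2 ^+ m k * (3 ^+ k * yseq m y0%:~R k) - 3 ^+ k :> rat.
  by rewrite exprSr; move: (yseq m y0%:~R k) => Y; field.
rewrite H3 IH ?(ltnW hk) // bsumS exprD exprSr -mulrA H.
have E : forall j, ((2 ^+ j : int)%:~R : rat) = 2 ^+ j by move=> j; rewrite rmorphXn.
rewrite E; ring.
Qed.

Lemma PzX (a j : nat) : ((a ^ j)%N%:Z) = (a%:Z) ^+ j.
Proof. by rewrite -!natz natrX. Qed.

Lemma intrX3 j : ((3 ^+ j : int)%:~R : rat) = 3 ^+ j.
Proof. by rewrite rmorphXn. Qed.
Lemma intrX2 j : ((2 ^+ j : int)%:~R : rat) = 2 ^+ j.
Proof. by rewrite rmorphXn. Qed.

Lemma explicit n m (x : nat -> int)
  (hxrec : forall k : nat, (1 <= k <= n)%N ->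
     3 * x k = 2 ^+ m k.-1 * x k.-1 - 1) (y0 t : int) k :
  y0 = x 0%N + t * (2 * 3 ^+ n) -> (k <= n)%N ->
  yseq m y0%:~R k = (x k + t * 2 ^+ (bsum m k).+1 * 3 ^+ (n - k))%:~R.
Proof.
move=> y0E hk.
apply: (@mulfI _ (3 ^+ k)); first by rewrite expf_neq0.
rewrite (@key n m x hxrec) // y0E.
rewrite !rmorphD !rmorphM /= !intrX2 !intrX3.
rewrite -(subnKC hk) addKn exprD !exprS; ring.
Qed.

Theorem lemma10 (n : nat) (m : nat -> nat) (x : nat -> int)
  (hn : (0 < n)%N)
  (hm : forall h : nat, (h < n)%N -> (0 < m h)%N)
  (hx : forall k : nat, (k <= n)%N -> pos_odd (x k))
  (hxrec : forall k : nat, (1 <= k <= n)%N ->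
     3 * x k = 2 ^+ m k.-1 * x k.-1 - 1) :
  (forall y0 : int, pos_odd y0 ->
     ((forall k : nat, (1 <= k <= n)%N ->
         exists z : int, yseq m y0%:~R k = z%:~R)
      <-> (y0 == x 0%N %[mod (2 * 3 ^ n)%N%:Z])%Z)
     /\ ((y0 == x 0%N %[mod (2 * 3 ^ n)%N%:Z])%Z ->
         forall k : nat, (k <= n)%N ->
           exists z : int, yseq m y0%:~R k = z%:~R /\ (z %% 2)%Z = 1 /\
             (z == x k %[mod (2 ^ (bsum m k).+1 * 3 ^ (n - k))%N%:Z])%Z))
  /\
  (forall N : nat, exists y0 : int, N%:Z < y0 /\ pos_odd y0 /\
     forall k : nat, (k <= n)%N ->
       exists z : int, yseq m y0%:~R k = z%:~R /\ pos_odd z).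
Proof.
have hM : (2 * 3 ^ n)%N%:Z = 2 * 3 ^+ n by rewrite PoszM PzX.
have hMk : forall k, (2 ^ (bsum m k).+1 * 3 ^ (n - k))%N%:Z
   = 2 ^+ (bsum m k).+1 * 3 ^+ (n - k) by move=> k; rewrite PoszM !PzX.
have back : forall y0 t k, y0 = x 0%N + t * (2 * 3 ^+ n) -> (k <= n)%N ->
   exists z : int, yseq m y0%:~R k = z%:~R /\ (z %% 2)%Z = 1 /\
             (z == x k %[mod (2 ^ (bsum m k).+1 * 3 ^ (n - k))%N%:Z])%Z
          /\ (0 <= t -> 0 < z).
  move=> y0 t k y0E hk.
  exists (x k + t * 2 ^+ (bsum m k).+1 * 3 ^+ (n - k)).
  split; first exact: (@explicit n m x hxrec).
  have [hx0 hx2] := hx k hk.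
  split.
    have -> : x k + t * 2 ^+ (bsum m k).+1 * 3 ^+ (n - k) =
      (t * 2 ^+ (bsum m k) * 3 ^+ (n - k)) * 2 + x k by rewrite exprS; ring.
    by rewrite modzMDl.
  split.
    rewrite eqz_mod_dvd hMk addrAC subrr add0r -mulrA.
    by apply: dvdz_mull; exact: dvdzz.
  move=> t0; apply: (@lt_le_trans _ _ (x k)) => //.
  rewrite lerDl; apply: mulr_ge0; first apply: mulr_ge0 => //.
    by apply: exprn_ge0.
  by apply: exprn_ge0.
split.
  move=> y0 [hy0 hy2].
  have fwd : (y0 == x 0%N %[mod (2 * 3 ^ n)%N%:Z])%Z ->
      exists t, y0 = x 0%N + t * (2 * 3 ^+ n).
    rewrite eqz_mod_dvd hM => /dvdzP [t ht]; exists t.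
    by rewrite -ht addrC subrK.
  split; last first.
    move=> /fwd [t ht] k hk.
    have [z [? [? [? _]]]] := back y0 t k ht hk.
    by exists z.
  split.
    move=> H.
    have := H n; rewrite hn leqnn => /(_ isT) [z hz].
    have := (@key n m x hxrec y0 n (leqnn n)).
    rewrite hz => hK.
    have hE : 3 ^+ n * z = 3 ^+ n * x n + 2 ^+ bsum m n * (y0 - x 0%N).
      apply: (@intr_inj rat).
      by rewrite !rmorphD !rmorphM /= !rmorphB /= intrX2 intrX3 hK.
    have h3 : (3 ^+ n %| y0 - x 0%N)%Z.
      rewrite -(@Gauss_dvdzr _ (2 ^+ bsum m n)); last first.
        by apply: coprimezXl; apply: coprimezXr.
      have -> : 2 ^+ bsum m n * (y0 - x 0%N) = 3 ^+ n * (z - x n) by rewrite [RHS]mulrBr hE; ring.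
      by apply: dvdz_mulr; exact: dvdzz.
    have h2 : (2 %| y0 - x 0%N)%Z.
      rewrite -eqz_mod_dvd; apply/eqP.
      by rewrite hy2; have [_ ->] := hx 0%N (leq0n n).
    rewrite eqz_mod_dvd hM Gauss_dvdz ?h2 ?h3 //.
    by apply: coprimezXr.
  move=> /fwd [t ht] k /andP [k1 hk].
  have [z [? _]] := back y0 t k ht hk.
  by exists z.
move=> N.
exists (x 0%N + N%:Z * (2 * 3 ^+ n)).
have [hx0 hx2] := hx 0%N (leq0n n).
split.
  apply: ltr_pwDl => //.
  apply: ler_peMr => //.
  have h3 : (1 : int) <= 3 ^+ n by apply: exprn_ege1.
  apply: (le_trans h3); rewrite ler_peMl //; first exact: (le_trans _ h3).
split.
  split.
    apply: ltr_pwDl => //; apply: mulr_ge0 => //; apply: mulr_ge0 => //; exact: exprn_ge0.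
  have -> : x 0%N + N%:Z * (2 * 3 ^+ n) = (N%:Z * 3 ^+ n) * 2 + x 0%N by ring.
  by rewrite modzMDl.
move=> k hk.
have [z [hz [h2 [_ hp]]]] := back _ N%:Z k erefl hk.
by exists z; split => //; split => //; apply: hp.
Qed.
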